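(* Fix $m\ge 0$. Work with smooth functions $\psi(u_0,u_1,\dots,u_N)$ of finitely many variables on domains with $u_0>0$, and let $D=\sum_{k\ge 0}u_{k+1}\frac{\partial}{\partial u_k}$ be the total derivative (so that, along $u_k=q^{(k)}(x)$, $D$ acts as $\frac{d}{dx}$). Define operators $$E=\sum_j u_j\frac{\partial}{\partial u_j},\qquad \Lambda=\sum_j(-1)^{j+1}D^j\frac{\partial}{\partial u_j},\qquad L=\sum_j(-1)^jD^j\Big(u_0\frac{\partial}{\partial u_j}\,\cdot\Big).$$ Let $\phi=\phi(u_0,\dots,u_m)$ be smooth with $E\phi=\phi$, i.e. $\phi=\sum_{j=0}^m u_j\frac{\partial\phi}{\partial u_j}$, and let $$S=\Lambda\phi=\sum_{j=0}^m(-1)^{j+1}D^j\frac{\partial\phi}{\partial u_j},$$ a function of $(u_0,\dots,u_{2m})$. Then $$LS=\sum_{j=0}^{2m}(-1)^jD^j\Big(u_0\frac{\partial S}{\partial u_j}\Big)=0 .$$ *)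

(* Defs.v *)
From HB Require Import structures.
From mathcomp Require Import all_boot all_order all_algebra.
From mathcomp Require Import all_classical all_reals all_analysis.
Set Implicit Arguments. Unset Strict Implicit. Unset Printing Implicit Defensive.
Import Order.TTheory GRing.Theory Num.Theory.
Import numFieldNormedType.Exports.
Local Open Scope ring_scope.

Section JetSpace.
Variable R : realType.

(* A point of the jet space: the sequence of coordinates (u_0, u_1, u_2, ...). *)
Local Notation jet := {ptws nat -> R}.

Definition shift (u : jet) (j : nat) (t : R) : jet :=
  fun i => if i == j then u i + t else u i.

Definition partial (j : nat) (psi : jet -> R) : jet -> R :=
  fun u => derive1 (fun t : R => psi (shift u j t)) 0.

Fixpoint iterp (js : seq nat) (psi : jet -> R) : jet -> R :=
  match js with
  | [::] => psi
  | j :: js' => partial j (iterp js' psi)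
  end.

Definition depends_upto (n : nat) (psi : jet -> R) : Prop :=
  forall u v : jet, (forall i, (i <= n)%N -> u i = v i) -> psi u = psi v.

Definition smooth_pos (psi : jet -> R) : Prop :=
  forall (js : seq nat) (u : jet), 0 < u 0%N ->
    {for u, continuous (iterp js psi)} /\
    forall j : nat, derivable (fun t : R => iterp js psi (shift u j t)) 0 1.

(* The total derivative D = sum_k u_{k+1} d/du_k, truncated to k < K
   (this is exactly D on functions depending only on u_0, ..., u_{K-1}). *)
Definition totalD (K : nat) (psi : jet -> R) : jet -> R :=
  fun u => \sum_(k < K) u k.+1 * partial k psi u.

Definition euler_hom (m : nat) (phi : jet -> R) : Prop :=
  forall u : jet, 0 < u 0%N -> phi u = \sum_(j < m.+1) u j * partial j phi u.

Definition Lambda_op (K m : nat) (phi : jet -> R) : jet -> R :=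
  fun u => \sum_(j < m.+1) (-1) ^+ j.+1 * iter j (totalD K) (partial j phi) u.

Definition L_op (K n : nat) (S : jet -> R) : jet -> R :=
  fun u => \sum_(j < n.+1)
    (-1) ^+ j * iter j (totalD K) (fun v : jet => v 0%N * partial j S v) u.

End JetSpace.

(* Main.v *)
Require Import Defs.
From HB Require Import structures.
From mathcomp Require Import all_boot all_order all_algebra.
From mathcomp Require Import all_classical all_reals all_analysis.
From mathcomp Require Import ring lra zify.
Import Order.TTheory GRing.Theory Num.Theory.
Import numFieldNormedType.Exports.
Local Open Scope ring_scope.
Local Open Scope classical_set_scope.
Set Implicit Arguments. Unset Strict Implicit. Unset Printing Implicit Defensive.

Section Jet.
Variable R : realType.
Local Notation jet := {ptws nat -> R}.
Local Notation sh := (@Defs.shift R).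
Implicit Types (f g F G : jet -> R) (c : R) (u v : jet).

Definition pos (u : jet) := 0 < u 0%N.
Definition eqp (f g : jet -> R) := forall u, pos u -> f u = g u.
Definition dvb (f : jet -> R) (u : jet) (j : nat) :=
  derivable (fun t : R => f (sh u j t)) 0 1.
Definition reg (h : jet -> R) := forall u, pos u ->
  {for u, continuous h} /\ forall j, dvb h u j.

Lemma sh_pos u j : pos u -> \forall t \near (0:R), pos (sh u j t).
Proof.
move=> pu; have := @nbhs0_lt _ R _ pu; apply: filterS => t /= ht.
rewrite /pos /Defs.shift; case: eqP => // _.
move: ht; rewrite ltr_norml => /andP[h1 _]; lra.
Qed.
Lemma pos_near u : pos u -> \forall v \near (u : jet), pos v.
Proof.
move=> pu.
have hc : (fun v : jet => v 0%N) @ u --> u 0%N.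
  exact: (@proj_continuous nat (fun _ => R) 0%N u).
exact: (cvgr_gt (u 0%N) hc 0 pu).
Qed.
Lemma shK u j t s : sh (sh u j t) j s = sh u j (t + s).
Proof. by apply: funext => k; rewrite /Defs.shift; case: eqP => // _; rewrite addrA. Qed.

Lemma sh0 u j : sh u j 0 = u.
Proof. by apply: funext => k; rewrite /Defs.shift; case: eqP => // _; rewrite addr0. Qed.

Lemma shC u i j s t : i != j -> sh (sh u i s) j t = sh (sh u j t) i s.
Proof.
move=> ij; apply: funext => k; rewrite /Defs.shift.
have [->|kj] := eqVneq k j.
  by rewrite eq_sym (negbTE ij).
by [].
Qed.

Lemma partial_eqp j f g : eqp f g -> eqp (partial j f) (partial j g).
Proof.
move=> fg u pu; rewrite /partial !derive1E; apply: near_eq_derive.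
near=> t; rewrite fg //; near: t; exact: sh_pos.
Unshelve. all: by end_near. Qed.

Lemma iterp_eqp js f g : eqp f g -> eqp (iterp js f) (iterp js g).
Proof. by elim: js => //= j js IH fg; apply: partial_eqp; apply: IH. Qed.

Lemma dvb_eqp f g u j : eqp f g -> pos u -> dvb f u j -> dvb g u j.
Proof.
move=> fg pu; apply: near_eq_derivable.
near=> t; rewrite fg //; near: t; exact: sh_pos.
Unshelve. all: by end_near. Qed.

Lemma reg_eqp f g : eqp f g -> reg f -> reg g.
Proof.
move=> fg rf u pu; have [cf df] := rf u pu; split; last first.
  by move=> j; apply: dvb_eqp fg pu (df j).
have H : \forall v \near (u : jet), f v = g v.
  by near=> v; rewrite fg //; near: v; exact: pos_near.
have E : f u = g u by rewrite fg.
have := cvg_trans (near_eq_cvg H) cf.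
rewrite E => /(_ (nbhs_filter u)).
by [].
Unshelve. all: by end_near. Qed.

Lemma shE u j t i : sh u j t i = if i == j then u i + t else u i.
Proof. by []. Qed.

Lemma partialE j f u : partial j f u = 'D_1 (fun t : R => f (sh u j t)) 0.
Proof. by rewrite /partial derive1E. Qed.

Lemma partialD j f g u : dvb f u j -> dvb g u j ->
  partial j (fun v => f v + g v) u = partial j f u + partial j g u.
Proof.
move=> df dg; rewrite !partialE -deriveD //.
Qed.

Lemma dvbD j f g u : dvb f u j -> dvb g u j -> dvb (fun v => f v + g v) u j.
Proof. move=> df dg; exact: derivableD df dg. Qed.

Lemma partialZ j c f u : dvb f u j ->
  partial j (fun v => c * f v) u = c * partial j f u.
Proof. move=> df; rewrite !partialE -deriveMl //. Qed.

Lemma dvbZ j c f u : dvb f u j -> dvb (fun v => c * f v) u j.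
Proof.
move=> df; rewrite /dvb.
have -> : (fun t => c * f (sh u j t)) = (cst c * (fun t => f (sh u j t)))%R by [].
by apply: derivableM => //; exact: derivable_cst.
Qed.

Lemma partialM j f g u : dvb f u j -> dvb g u j ->
  partial j (fun v => f v * g v) u = f u * partial j g u + g u * partial j f u.
Proof.
move=> df dg; rewrite !partialE.
have -> : (fun t => f (sh u j t) * g (sh u j t)) =
   ((fun t => f (sh u j t)) * (fun t => g (sh u j t)))%R by [].
by rewrite deriveM // /= sh0.
Qed.

Lemma dvbM j f g u : dvb f u j -> dvb g u j -> dvb (fun v => f v * g v) u j.
Proof. move=> df dg; exact: derivableM df dg. Qed.

Lemma sh_coord u i j :
  (fun t : R => sh u j t i) = if i == j then (cst (u i) + id)%R else cst (u i).
Proof. by apply: funext => t; rewrite shE; case: (i == j). Qed.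

Lemma dvb_x i j u : dvb (fun v => v i) u j.
Proof.
rewrite /dvb sh_coord; case: (i == j); last exact: derivable_cst.
by apply: derivableD; [exact: derivable_cst|exact: derivable_id].
Qed.

Lemma partial_x i j (u : jet) : partial j (fun v : jet => v i) u = (i == j)%:R.
Proof.
rewrite partialE sh_coord; case: (i == j); last by rewrite derive_cst.
by rewrite deriveD ?derive_cst ?derive_id ?add0r.
Qed.

Lemma partial_cst j (c : R) (u : jet) : partial j (fun _ : jet => c) u = 0.
Proof. by rewrite partialE derive_cst. Qed.

Lemma dvb_cst j (c : R) u : dvb (fun _ => c) u j.
Proof. exact: derivable_cst. Qed.

Definition dep (n : nat) (f : jet -> R) :=
  forall u v : jet, (forall i, (i < n)%N -> u i = v i) -> f u = f v.

Lemma partial_dep0 n j f : dep n f -> (n <= j)%N -> forall u, partial j f u = 0.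
Proof.
move=> df nj u; rewrite partialE.
have -> : (fun t => f (sh u j t)) = cst (f u).
  apply: funext => t /=; apply: df => i ilt; rewrite shE.
  by case: eqP => // ij; move: ilt; rewrite ij ltnNge nj.
by rewrite derive_cst.
Qed.

Lemma dep_partial n j f : dep n f -> dep n (partial j f).
Proof.
move=> df u v uv; rewrite !partialE.
have -> : (fun t => f (sh u j t)) = (fun t => f (sh v j t)).
  by apply: funext => t; apply: df => i ilt; rewrite !shE uv.
by [].
Qed.

Lemma dep_mono n n' f : (n <= n')%N -> dep n f -> dep n' f.
Proof. by move=> nn df u v uv; apply: df => i ilt; apply: uv; exact: leq_trans ilt nn. Qed.

Lemma dep_add n f g : dep n f -> dep n g -> dep n (fun v => f v + g v).
Proof. by move=> df dg u v uv; rewrite (df u v) // (dg u v). Qed.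

Lemma dep_mul n f g : dep n f -> dep n g -> dep n (fun v => f v * g v).
Proof. by move=> df dg u v uv; rewrite (df u v) // (dg u v). Qed.

Lemma dep_x i : dep i.+1 (fun v => v i).
Proof. by move=> u v uv; apply: uv. Qed.

Lemma dep_cst n c : dep n (fun _ => c).
Proof. by []. Qed.

End Jet.


Section Jet.
Variable R : realType.
Local Notation jet := {ptws nat -> R}.
Local Notation sh := (@Defs.shift R).
Implicit Types (f g F G : jet -> R) (c : R) (u v : jet).


Lemma iterp_rcons js j f : iterp (rcons js j) f = iterp js (partial j f).
Proof. by elim: js => //= k js ->. Qed.

Lemma good_reg f : smooth_pos f -> forall js, reg (iterp js f).
Proof. by move=> sf js u pu; apply: sf. Qed.

Lemma reg_good f : (forall js, reg (iterp js f)) -> smooth_pos f.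
Proof. by move=> rf js u pu; apply: rf. Qed.

Lemma good_dvb f u j : smooth_pos f -> pos u -> dvb f u j.
Proof. by move=> sf pu; have [_] := sf [::] u pu; apply. Qed.

Lemma good_iterp js f : smooth_pos f -> smooth_pos (iterp js f).
Proof.
elim: js => //= j js IH sf; apply: reg_good => ks.
have := good_reg (IH sf) (rcons ks j); rewrite iterp_rcons //.
Qed.

Lemma good_reg_sp js f : smooth_pos f -> smooth_pos (iterp js f).
Proof. exact: good_iterp. Qed.

Lemma good_partial j f : smooth_pos f -> smooth_pos (partial j f).
Proof. by move=> sf; apply: reg_good => js; rewrite -iterp_rcons; apply: good_reg. Qed.

Lemma reg_add F G : reg F -> reg G -> reg (fun v => F v + G v).
Proof.
move=> rF rG u pu; have [cF dF] := rF u pu; have [cG dG] := rG u pu; split.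
  have FF : Filter (nbhs u) := nbhs_filter u.
  exact: (cvgD cF cG).
by move=> j; apply: dvbD.
Qed.

Lemma reg_scale c F : reg F -> reg (fun v => c * F v).
Proof.
move=> rF u pu; have [cF dF] := rF u pu; split.
  have FF : Filter (nbhs u) := nbhs_filter u.
  exact: (cvgM (cvg_cst c) cF).
by move=> j; apply: dvbZ.
Qed.

Lemma reg_xmul i F : reg F -> reg (fun v => v i * F v).
Proof.
move=> rF u pu; have [cF dF] := rF u pu; split.
  have FF : Filter (nbhs u) := nbhs_filter u.
  apply: (cvgM _ cF).
  exact: (@proj_continuous nat (fun _ => R) i u).
by move=> j; apply: dvbM => //; apply: dvb_x.
Qed.

Lemma reg_cst c : reg (fun _ => c).
Proof.
move=> u pu; split; last by move=> j; apply: dvb_cst.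
have FF : Filter (nbhs u) := nbhs_filter u.
exact: cvg_cst.
Qed.

Lemma good_cst c : smooth_pos (fun _ : jet => c).
Proof.
apply: reg_good => js.
suff [c' ->] : exists c', iterp js (fun _ : jet => c) = (fun _ => c') by apply: reg_cst.
elim: js => [|j js [c' IH]] /=; first by exists c.
by exists 0; rewrite IH; apply: funext => u; rewrite partial_cst.
Qed.

End Jet.


Section Jet.
Variable R : realType.
Local Notation jet := {ptws nat -> R}.
Local Notation sh := (@Defs.shift R).
Implicit Types (f g F G : jet -> R) (c : R) (u v : jet).
Lemma good_add f g : smooth_pos f -> smooth_pos g -> smooth_pos (fun v => f v + g v).
Proof.
move=> sf sg; apply: reg_good => js.
suff E : eqp (fun v => iterp js f v + iterp js g v) (iterp js (fun v => f v + g v)).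
  by apply: reg_eqp E _; apply: reg_add; apply: good_reg.
elim: js => [|j js IH] //= u pu.
rewrite -(partial_eqp j IH pu) partialD //; apply: good_dvb => //; exact: good_reg_sp.
Qed.

Lemma eqp_sym f g : eqp f g -> eqp g f.
Proof. by move=> fg u pu; rewrite fg. Qed.

Lemma eqp_trans f g h : eqp f g -> eqp g h -> eqp f h.
Proof. by move=> fg gh u pu; rewrite fg ?gh. Qed.

Lemma good_scale c f : smooth_pos f -> smooth_pos (fun v => c * f v).
Proof.
move=> sf; apply: reg_good => js.
suff E : eqp (fun v => c * iterp js f v) (iterp js (fun v => c * f v)).
  by apply: reg_eqp E _; apply: reg_scale; apply: good_reg.
elim: js => [|j js IH] //= u pu.
rewrite -(partial_eqp j IH pu) partialZ //; apply: good_dvb => //; exact: good_iterp.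
Qed.

Lemma good_xmul i f : smooth_pos f -> smooth_pos (fun v => v i * f v).
Proof.
move=> sf.
suff H : forall js, exists g, smooth_pos g /\
  eqp (fun v => v i * iterp js f v + g v) (iterp js (fun v => v i * f v)).
  apply: reg_good => js; have [g [sg E]] := H js.
  by apply: reg_eqp E _; apply: reg_add; [apply: reg_xmul; apply: good_reg|exact: (good_reg sg [::])].
elim=> [|j js [g [sg IH]]] /=.
  by exists (fun _ => 0); split; [apply: good_cst|move=> u pu; rewrite addr0].
exists (fun v => (i == j)%:R * iterp js f v + partial j g v); split.
  by apply: good_add; [apply: good_scale; apply: good_iterp|apply: good_partial].
move=> u pu; rewrite -(partial_eqp j IH pu).
have dF : dvb (iterp js f) u j by apply: good_dvb => //; apply: good_iterp.
rewrite partialD //; last by apply: good_dvb.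
  rewrite partialM //; last exact: dvb_x.
  by rewrite partial_x; ring.
by apply: dvbM => //; exact: dvb_x.
Qed.

Lemma good_sum n (F : nat -> jet -> R) : (forall k, smooth_pos (F k)) ->
  smooth_pos (fun v => \sum_(k < n) F k v).
Proof.
move=> sF; elim: n => [|n IH].
  have -> : (fun v : jet => \sum_(k < 0) F k v) = (fun _ => 0).
    by apply: funext => v; rewrite big_ord0.
  exact: good_cst.
have -> : (fun v : jet => \sum_(k < n.+1) F k v) = (fun v => \sum_(k < n) F k v + F n v).
  by apply: funext => v; rewrite big_ord_recr.
exact: good_add.
Qed.

End Jet.


Section Jet.
Variable R : realType.
Local Notation jet := {ptws nat -> R}.
Local Notation sh := (@Defs.shift R).
Implicit Types (f g F G : jet -> R) (c : R) (u v : jet).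
Variable K : nat.
Local Notation D := (totalD K).

Lemma good_D f : smooth_pos f -> smooth_pos (D f).
Proof.
move=> sf; apply: (@good_sum _ K (fun k v => v k.+1 * partial k f v)) => k.
by apply: good_xmul; apply: good_partial.
Qed.

Lemma good_iterD n f : smooth_pos f -> smooth_pos (iter n D f).
Proof. by move=> sf; elim: n => //= n IH; apply: good_D. Qed.

Lemma D_eqp f g : eqp f g -> eqp (D f) (D g).
Proof.
move=> fg u pu; rewrite /totalD; apply: eq_bigr => k _.
by rewrite (partial_eqp k fg pu).
Qed.

Lemma iterD_eqp n f g : eqp f g -> eqp (iter n D f) (iter n D g).
Proof. by move=> fg; elim: n => //= n IH; apply: D_eqp. Qed.

Lemma D_zero : D (fun _ : jet => (0:R)) = (fun _ => 0).
Proof.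
apply: funext => u; rewrite /totalD big1 // => k _.
by rewrite partial_cst mulr0.
Qed.

Lemma iterD_zero n : iter n D (fun _ : jet => (0:R)) = (fun _ => 0).
Proof. by elim: n => //= n ->; rewrite D_zero. Qed.

Lemma D_lin a b f g : smooth_pos f -> smooth_pos g ->
  eqp (D (fun v => a * f v + b * g v)) (fun v => a * D f v + b * D g v).
Proof.
move=> sf sg u pu; rewrite /totalD !mulr_sumr -big_split /=.
apply: eq_bigr => k _.
rewrite partialD ?partialZ; first by ring.
- exact: good_dvb.
- exact: good_dvb.
- by apply: dvbZ; apply: good_dvb.
- by apply: dvbZ; apply: good_dvb.
Qed.

Lemma D_add f g : smooth_pos f -> smooth_pos g ->
  eqp (D (fun v => f v + g v)) (fun v => D f v + D g v).
Proof.
move=> sf sg u pu; have := D_lin 1 1 sf sg pu.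
have -> : (fun v => 1 * f v + 1 * g v) = (fun v => f v + g v).
  by apply: funext => v; rewrite !mul1r.
by rewrite !mul1r.
Qed.

Lemma iterD_lin n a b f g : smooth_pos f -> smooth_pos g ->
  eqp (iter n D (fun v => a * f v + b * g v))
      (fun v => a * iter n D f v + b * iter n D g v).
Proof.
move=> sf sg; elim: n => [|n IH] /=; first by [].
apply: eqp_trans (D_eqp IH) _.
by apply: D_lin; apply: good_iterD.
Qed.

Lemma D_xmul i f : (i < K)%N -> smooth_pos f ->
  eqp (D (fun v => v i * f v)) (fun v => v i.+1 * f v + v i * D f v).
Proof.
move=> iK sf u pu; rewrite /totalD.
have E : forall k : 'I_K, u k.+1 * partial k (fun v => v i * f v) u =
    u k.+1 * ((i == k)%:R * f u) + u i * (u k.+1 * partial k f u).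
  move=> k; rewrite partialM ?partial_x; first by ring.
  - exact: dvb_x.
  - exact: good_dvb.
rewrite (eq_bigr _ (fun k _ => E k)) big_split /= -mulr_sumr.
congr (_ + _).
rewrite (bigD1 (Ordinal iK)) //= eqxx mul1r big1 ?addr0 // => k kneq.
have -> : (i == k) = false.
  apply/negbTE; move: kneq; apply: contra => /eqP ik; apply/eqP.
  by apply: val_inj; rewrite /= ik.
by rewrite mul0r mulr0.
Qed.

Lemma partial_sum j n (F : nat -> jet -> R) u : (forall k, dvb (F k) u j) ->
  partial j (fun v => \sum_(k < n) F k v) u = \sum_(k < n) partial j (F k) u
  /\ dvb (fun v => \sum_(k < n) F k v) u j.
Proof.
move=> dF; elim: n => [|n [IH1 IH2]].
  have -> : (fun v : jet => \sum_(k < 0) F k v) = (fun _ => 0).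
    by apply: funext => v; rewrite big_ord0.
  by rewrite big_ord0 partial_cst; split => //; apply: dvb_cst.
have -> : (fun v : jet => \sum_(k < n.+1) F k v) = (fun v => \sum_(k < n) F k v + F n v).
  by apply: funext => v; rewrite big_ord_recr.
rewrite big_ord_recr partialD // IH1; split => //.
exact: dvbD.
Qed.

Lemma D_sum n (F : nat -> jet -> R) : (forall k, smooth_pos (F k)) ->
  eqp (D (fun v => \sum_(k < n) F k v)) (fun v => \sum_(k < n) D (F k) v).
Proof.
move=> sF; elim: n => [|n IH].
  have -> : (fun v : jet => \sum_(k < 0) F k v) = (fun _ => 0).
    by apply: funext => v; rewrite big_ord0.
  by rewrite D_zero => u pu; rewrite big_ord0.
have -> : (fun v : jet => \sum_(k < n.+1) F k v) = (fun v => \sum_(k < n) F k v + F n v).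
  by apply: funext => v; rewrite big_ord_recr.
move=> u pu; rewrite big_ord_recr /= -(IH u pu).
by rewrite (D_add (good_sum n sF) (sF n) pu).
Qed.

End Jet.


Section Sch.
Variable R : realType.
Lemma mvt_open (f df : R -> R) (r h : R) : 0 < h -> h < r ->
  (forall x : R, `|x| < r -> is_derive x (1:R) f (df x)) ->
  exists2 c, 0 < c < h & f h - f 0 = df c * h.
Proof.
move=> h0 hr fd.
have hin x : x \in `[0, h]%R -> `|x| < r.
  rewrite in_itv /= => /andP[x0 xh]; rewrite ger0_norm //; lra.
have Hd : forall x, x \in `]0, h[%R -> is_derive x (1:R) f (df x).
  move=> x xin; apply: fd; apply: hin; move: xin; rewrite !in_itv /= => /andP[a b].
  by apply/andP; split; apply: ltW.
have Hc : {within [set` `[0, h]%R], continuous f}.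
  apply: derivable_within_continuous => x xin.
  by case: (fd x (hin x xin)).
have [c cin E] := MVT h0 Hd Hc.
by exists c; [move: cin; rewrite in_itv|rewrite E subr0].
Qed.

Lemma small3 (a b c : R) : 0 < a -> 0 < b -> 0 < c ->
  exists h : R, [/\ 0 < h, h < a, h < b & h < c].
Proof.
move=> a0 b0 c0; exists (Num.min a (Num.min b c) / 2).
have m0 : 0 < Num.min a (Num.min b c) by rewrite !lt_min a0 b0 c0.
have ma : Num.min a (Num.min b c) <= a by rewrite ge_min lexx.
have mb : Num.min a (Num.min b c) <= b by rewrite !ge_min lexx orbT.
have mc : Num.min a (Num.min b c) <= c by rewrite !ge_min lexx !orbT.
split; lra.
Qed.

Lemma schwarz2 (g gs gt gst gts : R -> R -> R) (r : R) : 0 < r ->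
  (forall s t, `|s| < r -> `|t| < r -> is_derive s (1:R) (fun x => g x t) (gs s t)) ->
  (forall s t, `|s| < r -> `|t| < r -> is_derive t (1:R) (fun y => g s y) (gt s t)) ->
  (forall s t, `|s| < r -> `|t| < r -> is_derive t (1:R) (fun y => gs s y) (gst s t)) ->
  (forall s t, `|s| < r -> `|t| < r -> is_derive s (1:R) (fun x => gt x t) (gts s t)) ->
  (forall e, 0 < e -> exists2 d, 0 < d & forall s t, `|s| < d -> `|t| < d ->
      `|gst s t - gst 0 0| < e) ->
  (forall e, 0 < e -> exists2 d, 0 < d & forall s t, `|s| < d -> `|t| < d ->
      `|gts s t - gts 0 0| < e) ->
  gst 0 0 = gts 0 0.
Proof.
move=> r0 Hs Ht Hst Hts Cst Cts.
have key h : 0 < h -> h < r -> exists s1 t1 s2 t2,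
    [/\ 0 < s1 < h, 0 < t1 < h, 0 < s2 < h, 0 < t2 < h & gst s1 t1 = gts s2 t2].
  move=> h0 hr.
  have nr x : 0 < x < h -> `|x| < r.
    by move=> /andP[x0 xh]; rewrite ger0_norm ?ltW //; lra.
  have hh : `|h| < r by rewrite ger0_norm ?ltW.
  have h0r : `|0 : R| < r by rewrite normr0.
  have [s1 s1in E1] := @mvt_open (fun x => g x h - g x 0)
       (fun x => gs x h - gs x 0) r h h0 hr
       (fun x xr => is_deriveB (Hs x h xr hh) (Hs x 0 xr h0r)).
  have [t1 t1in E2] := @mvt_open (fun y => gs s1 y) (fun y => gst s1 y) r h h0 hr
       (fun y yr => Hst s1 y (nr _ s1in) yr).
  have [t2 t2in E3] := @mvt_open (fun y => g h y - g 0 y)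
       (fun y => gt h y - gt 0 y) r h h0 hr
       (fun y yr => is_deriveB (Ht h y hh yr) (Ht 0 y h0r yr)).
  have [s2 s2in E4] := @mvt_open (fun x => gt x t2) (fun x => gts x t2) r h h0 hr
       (fun x xr => Hts x t2 xr (nr _ t2in)).
  exists s1, t1, s2, t2; split => //.
  have hn : h != 0 by rewrite gt_eqF.
  have : gst s1 t1 * h * h = gts s2 t2 * h * h.
    rewrite -E2 -E4; move: E1 E3 => /= E1 E3; rewrite -E1 -E3; ring.
  by move/(mulIf hn)/(mulIf hn).
apply/eqP; rewrite -subr_eq0 -normr_eq0 eq_le normr_ge0 andbT.
apply/unstable.ler_gtP => z z0.
have z2 : 0 < z / 2 by lra.
have [d1 d10 C1] := Cst _ z2; have [d2 d20 C2] := Cts _ z2.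
have [h [h0 hd1 hd2 hr]] := @small3 d1 d2 r d10 d20 r0.
have [s1 [t1 [s2 [t2 [s1in t1in s2in t2in E]]]]] := key h h0 hr.
have nd x d : 0 < x < h -> h < d -> `|x| < d.
  by move=> /andP[x0 xh] hd; rewrite ger0_norm ?ltW //; lra.
have A1 := C1 s1 t1 (nd _ _ s1in hd1) (nd _ _ t1in hd1).
have A2 := C2 s2 t2 (nd _ _ s2in hd2) (nd _ _ t2in hd2).
rewrite E in A1.
have : `|gst 0 0 - gts 0 0| <= `|gts s2 t2 - gst 0 0| + `|gts s2 t2 - gts 0 0|.
  rewrite (distrC (gts s2 t2)).
  have -> : gst 0 0 - gts 0 0 = (gst 0 0 - gts s2 t2) + (gts s2 t2 - gts 0 0) by ring.
  exact: ler_normD.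
lra.
Qed.

End Sch.

Section Jet.
Variable R : realType.
Local Notation jet := {ptws nat -> R}.
Local Notation sh := (@Defs.shift R).
Implicit Types (f g F G : jet -> R) (c : R) (u v : jet).

Lemma D1_sh (f : R -> R) s :
  'D_1 f s = 'D_1 (fun x => f (x + s)) 0 /\
  (derivable (fun x => f (x + s)) 0 1 -> derivable f s 1).
Proof.
have E : (fun h : R => h^-1 *: ((f \o shift s) (h *: 1) - f s)) =
   (fun h : R => h^-1 *: (((fun x => f (x + s)) \o shift 0) (h *: 1) -
       (fun x => f (x + s)) 0)).
  by apply: funext => h /=; rewrite addr0 add0r.
by split; rewrite /derive /derivable E.
Qed.

Lemma isder_sh (f : R -> R) s :
  derivable (fun x => f (x + s)) 0 1 ->
  is_derive s (1:R) f ('D_1 (fun x => f (x + s)) 0).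
Proof.
move=> d; have [E1 E2] := D1_sh f s.
by apply: DeriveDef; [exact: E2|rewrite E1].
Qed.

End Jet.


Section Jet.
Variable R : realType.
Local Notation jet := {ptws nat -> R}.
Local Notation sh := (@Defs.shift R).
Implicit Types (f g F G : jet -> R) (c : R) (u v : jet).
Lemma jet_cont2 (G : jet -> R) (u : jet) i j :
  {for u, continuous G} ->
  forall e : R, 0 < e -> exists2 d : R, 0 < d & forall s t : R, `|s| < d -> `|t| < d ->
     `|G (sh (sh u i s) j t) - G u| < e.
Proof.
move=> cG e e0.
pose F := filter_prod (nbhs (0:R)) (nbhs (0:R)).
have FF : Filter F by apply: filter_prod_filter.
have hW : (fun p : R * R => (sh (sh u i p.1) j p.2 : jet)) @ F --> u.
  apply/pointwise_cvgP => k.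
  suff H : (fun p : R * R => (sh (sh u i p.1) j p.2 : jet) k) @ F --> u k by [].
  have -> : (fun p : R * R => (sh (sh u i p.1) j p.2 : jet) k) =
      (fun p => u k + ((k == i)%:R * p.1 + (k == j)%:R * p.2)).
    apply: funext => p; rewrite !shE.
    by case: (k == j); case: (k == i); rewrite /= ?mulr1n ?mulr0n ?mul1r ?mul0r ?addr0 ?add0r ?addrA.
  have h1 : (fun p : R * R => p.1) @ F --> (0:R) by exact: cvg_fst.
  have h2 : (fun p : R * R => p.2) @ F --> (0:R) by exact: cvg_snd.
  have c1 := @cvgMl_tmp _ _ F FF _ ((k == i)%:R) _ h1.
  have c2 := @cvgMl_tmp _ _ F FF _ ((k == j)%:R) _ h2.
  have c3 := @cvgD _ _ _ F FF _ _ _ _ c1 c2.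
  have c0 : (fun _ : R * R => u k) @ F --> u k by exact: cvg_cst.
  have c4 := @cvgD _ _ _ F FF _ _ _ _ c0 c3.
  have E : u k + ((k == i)%:R * 0 + (k == j)%:R * 0) = u k by ring.
  rewrite E in c4; exact c4.
have FU : Filter (nbhs u) := nbhs_filter u.
have hc : (fun p : R * R => G (sh (sh u i p.1) j p.2)) @ F --> G u.
  exact: (cvg_comp _ _ hW cG).
have := @cvgr_dist_lt _ _ _ F FF _ _ hc e e0.
case=> [[A B] /= [nA nB] AB].
have [dA dA0 bA] := (nbhs_ballP _ _).1 nA.
have [dB dB0 bB] := (nbhs_ballP _ _).1 nB.
have [d [d0 ddA ddB _]] := @small3 _ dA dB 1 dA0 dB0 ltr01.
exists d => // s t sd td.
have : (A `*` B) (s, t).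
  split; [apply: bA|apply: bB]; rewrite /ball /= sub0r normrN; lra.
by move/AB => /=; rewrite distrC.
Qed.
End Jet.


Section Jet.
Variable R : realType.
Local Notation jet := {ptws nat -> R}.
Local Notation sh := (@Defs.shift R).
Implicit Types (f g F G : jet -> R) (c : R) (u v : jet).
Lemma wpos u i j s t : i != j -> pos u -> `|s| < u 0%N -> `|t| < u 0%N ->
  pos (sh (sh u i s) j t).
Proof.
move=> ij pu hs ht; rewrite /pos !shE; move: pu; rewrite /pos => pu.
move: hs ht; rewrite !ltr_norml => /andP[s1 s2] /andP[t1 t2].
case: (0%N == j) /eqP => [j0|_]; case: (0%N == i) /eqP => [i0|_].
- by move: ij; rewrite -i0 -j0 eqxx.
- lra.
- lra.
- lra.
Qed.

Lemma dS F u i j s t : i != j -> dvb F (sh (sh u i s) j t) i ->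
  is_derive s (1:R) (fun x => F (sh (sh u i x) j t)) (partial i F (sh (sh u i s) j t)).
Proof.
move=> ij dF.
have E : (fun x => F (sh (sh u i (x + s)) j t)) = (fun x => F (sh (sh (sh u i s) j t) i x)).
  by apply: funext => x; rewrite -(shC _ _ _ ij) shK (addrC x s).
have := @isder_sh _ (fun x => F (sh (sh u i x) j t)) s.
by rewrite E partialE; apply.
Qed.

Lemma dT F u i j s t : dvb F (sh (sh u i s) j t) j ->
  is_derive t (1:R) (fun y => F (sh (sh u i s) j y)) (partial j F (sh (sh u i s) j t)).
Proof.
move=> dF.
have E : (fun y => F (sh (sh u i s) j (y + t))) = (fun y => F (sh (sh (sh u i s) j t) j y)).
  by apply: funext => y; rewrite shK (addrC y t).
have := @isder_sh _ (fun y => F (sh (sh u i s) j y)) t.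
by rewrite E partialE; apply.
Qed.

Lemma schwarz f i j u : smooth_pos f -> pos u ->
  partial i (partial j f) u = partial j (partial i f) u.
Proof.
move=> sf pu; have [->//|ij] := eqVneq i j.
have w00 : sh (sh u i 0) j 0 = u by rewrite !sh0.
have gd F : smooth_pos F -> forall s t k, `|s| < u 0%N -> `|t| < u 0%N ->
    dvb F (sh (sh u i s) j t) k.
  by move=> sF s t k hs ht; apply: good_dvb => //; apply: wpos.
have pu' : 0 < u 0%N by [].
have H := @schwarz2 _ (fun s t => f (sh (sh u i s) j t))
  (fun s t => partial i f (sh (sh u i s) j t))
  (fun s t => partial j f (sh (sh u i s) j t))
  (fun s t => partial j (partial i f) (sh (sh u i s) j t))
  (fun s t => partial i (partial j f) (sh (sh u i s) j t)) (u 0%N) pu'.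
rewrite /= w00 in H; symmetry; apply: H.
- by move=> s t hs ht; apply: dS ij (gd f sf s t i hs ht).
- by move=> s t hs ht; apply: dT (gd f sf s t j hs ht).
- by move=> s t hs ht; apply: dT (gd _ (good_partial i sf) s t j hs ht).
- by move=> s t hs ht; apply: dS ij (gd _ (good_partial j sf) s t i hs ht).
- move=> e e0; have [d d0 Hd] := jet_cont2 i j (sf [:: j; i] u pu).1 e0.
  by exists d => // s t hs ht; rewrite /= w00; apply: Hd.
- move=> e e0; have [d d0 Hd] := jet_cont2 i j (sf [:: i; j] u pu).1 e0.
  by exists d => // s t hs ht; rewrite /= w00; apply: Hd.
Qed.

End Jet.


Section Jet.
Variable R : realType.
Local Notation jet := {ptws nat -> R}.
Local Notation sh := (@Defs.shift R).
Implicit Types (f g F G : jet -> R) (c : R) (u v : jet).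
Variable K : nat.
Local Notation D := (totalD K).

Lemma partial_D_gen l f : smooth_pos f ->
  eqp (partial l (D f))
      (fun v => \sum_(k < K) (k.+1 == l)%:R * partial k f v + D (partial l f) v).
Proof.
move=> sf u pu; rewrite /totalD.
have dk : forall k, dvb (fun v => v k.+1 * partial k f v) u l.
  move=> k; apply: dvbM; first exact: dvb_x.
  by apply: good_dvb => //; apply: good_partial.
rewrite (@partial_sum _ l K (fun k v => v k.+1 * partial k f v) u dk).1 -big_split /=.
apply: eq_bigr => k _.
rewrite partialM ?partial_x ?(schwarz l k sf pu); first by ring.
- exact: dvb_x.
- by apply: good_dvb => //; apply: good_partial.
Qed.

Lemma partial_D0 f : smooth_pos f -> eqp (partial 0 (D f)) (D (partial 0 f)).
Proof.
move=> sf u pu; rewrite (partial_D_gen 0 sf pu) big1 ?add0r // => k _.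
by rewrite mul0r.
Qed.

Lemma partial_DS j f : (j < K)%N -> smooth_pos f ->
  eqp (partial j.+1 (D f)) (fun v => partial j f v + D (partial j.+1 f) v).
Proof.
move=> jK sf u pu; rewrite (partial_D_gen j.+1 sf pu); congr (_ + _).
rewrite (bigD1 (Ordinal jK)) //= eqxx mul1r big1 ?addr0 // => k kneq.
have -> : (k.+1 == j.+1) = false.
  apply/negbTE; move: kneq; apply: contra => /eqP [kj]; apply/eqP.
  by apply: val_inj; rewrite /= kj.
by rewrite mul0r.
Qed.

Lemma iterD_add n f g : smooth_pos f -> smooth_pos g ->
  eqp (iter n D (fun v => f v + g v)) (fun v => iter n D f v + iter n D g v).
Proof.
move=> sf sg u pu; have := iterD_lin K n 1 1 sf sg pu.
have -> : (fun v => 1 * f v + 1 * g v) = (fun v => f v + g v).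
  by apply: funext => v; rewrite !mul1r.
by rewrite !mul1r.
Qed.

Definition EL (N : nat) (psi : jet -> R) : jet -> R :=
  fun u => \sum_(j < N.+1) (-1) ^+ j * iter j D (partial j psi) u.

Lemma EL_DA N A : (N <= K)%N -> smooth_pos A -> (forall u, partial N A u = 0) ->
  eqp (EL N (D A)) (fun _ => 0).
Proof.
move=> NK sA PN u pu; rewrite /EL big_ord_recl.
pose Y i := iter i.+1 D (partial i A) u.
pose Z i := (-1) ^+ i * Y i.
have E0 : (-1) ^+ (@ord0 N) * iter (@ord0 N) D (partial (@ord0 N) (D A)) u = Z 0%N.
  by rewrite /Z /Y /= expr0 !mul1r (partial_D0 sA pu).
have Ej : forall j : 'I_N, (-1) ^+ (lift ord0 j) * iter (lift ord0 j) D
      (partial (lift ord0 j) (D A)) u = Z j.+1 - Z j.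
  move=> j; rewrite lift0.
  have jK : (j < K)%N by apply: leq_trans (ltn_ord j) NK.
  rewrite (iterD_eqp K j.+1 (partial_DS jK sA) pu).
  rewrite (iterD_add j.+1 (good_partial j sA) (good_D K (good_partial j.+1 sA)) pu).
  rewrite -iterSr /Z /Y exprS; ring.
rewrite E0 (eq_bigr _ (fun j _ => Ej j)).
rewrite -(big_mkord xpredT (fun j => Z j.+1 - Z j)) telescope_sumr //.
have -> : Z N = 0.
  rewrite /Z /Y.
  have -> : partial N A = (fun _ => 0) by apply: funext => v; apply: PN.
  by rewrite iterD_zero mulr0.
by rewrite sub0r subrr.
Qed.

End Jet.


Section Jet.
Variable R : realType.
Local Notation jet := {ptws nat -> R}.
Local Notation sh := (@Defs.shift R).
Implicit Types (f g F G : jet -> R) (c : R) (u v : jet).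
Variable K : nat.
Local Notation D := (totalD K).

Lemma EL_lin N h a b f g : smooth_pos f -> smooth_pos g ->
  eqp h (fun v => a * f v + b * g v) ->
  eqp (EL K N h) (fun v => a * EL K N f v + b * EL K N g v).
Proof.
move=> sf sg hfg u pu; rewrite /EL !mulr_sumr -big_split /=; apply: eq_bigr => j _.
have E : eqp (partial j h) (fun v => a * partial j f v + b * partial j g v).
  move=> v pv; rewrite (partial_eqp j hfg pv) partialD ?partialZ //.
  - exact: good_dvb.
  - exact: good_dvb.
  - by apply: dvbZ; apply: good_dvb.
  - by apply: dvbZ; apply: good_dvb.
rewrite (iterD_eqp K j E pu).
rewrite (iterD_lin K j a b (good_partial j sf) (good_partial j sg) pu); ring.
Qed.

Fixpoint B (j : nat) (y : jet -> R) : jet -> R :=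
  if j is j'.+1 then (fun v => v j' * y v - B j' (D y) v) else (fun _ => 0).

Lemma good_B j y : smooth_pos y -> smooth_pos (B j y).
Proof.
elim: j y => [|j IH] y sy; first exact: good_cst.
change (B j.+1 y) with (fun v => v j * y v - B j (D y) v).
have -> : (fun v => v j * y v - B j (D y) v) =
    (fun v => 1 * (v j * y v) + (-1) * B j (D y) v).
  by apply: funext => v /=; ring.
apply: good_add; apply: good_scale; first exact: good_xmul.
by apply: IH; apply: good_D.
Qed.

Lemma DB j y : (j <= K)%N -> smooth_pos y ->
  eqp (D (B j y)) (fun v => v j * y v - (-1) ^+ j * (v 0%N * iter j D y v)).
Proof.
elim: j y => [|j IH] y jK sy u pu.
  change (B 0 y) with (fun _ : jet => (0:R)); rewrite D_zero /= expr0; ring.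
change (B j.+1 y) with (fun v => v j * y v - B j (D y) v).
have E1 : eqp (fun v => v j * y v - B j (D y) v)
    (fun v => 1 * (v j * y v) + (-1) * B j (D y) v) by move=> v _; ring.
have jK' : (j < K)%N by [].
have jK'' : (j <= K)%N by apply: ltnW.
rewrite (D_eqp K E1 pu).
rewrite (D_lin K 1 (-1) (good_xmul j sy) (good_B j (good_D K sy)) pu).
rewrite (D_xmul jK' sy pu) (IH (D y) jK'' (good_D K sy) u pu) -iterSr exprS.
ring.
Qed.

Lemma dep_D n f : dep n f -> dep n.+1 (D f).
Proof.
move=> df u v uv; rewrite /totalD; apply: eq_bigr => k _.
case: (ltnP k n) => kn.
  rewrite (uv k.+1) ?ltnS //; congr (_ * _).
  by apply: (dep_partial k df) => i ilt; apply: uv; apply: ltnW.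
by rewrite !(partial_dep0 df kn) !mulr0.
Qed.

Lemma dep_B j n y : dep n y -> (0 < n)%N -> dep (n + j.-1) (B j y).
Proof.
elim: j n y => [|j IH] n y dy n0; first by move=> u v _.
change (B j.+1 y) with (fun v => v j * y v - B j (D y) v).
move=> u v uv; rewrite /= in uv.
have h1 : u j = v j by apply: uv; lia.
have h2 : y u = y v by apply: dy => i ilt; apply: uv; lia.
have h3 : B j (D y) u = B j (D y) v.
  case: j IH uv h1 h2 => [|j] IH uv h1 h2; first by [].
  apply: (IH n.+1 (D y) (dep_D dy) isT) => i ilt; apply: uv; move: ilt; rewrite /=; lia.
by rewrite h1 h2 h3.
Qed.

End Jet.


Section Jet.
Variable R : realType.
Local Notation jet := {ptws nat -> R}.
Local Notation sh := (@Defs.shift R).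
Implicit Types (f g F G : jet -> R) (c : R) (u v : jet).
Variable K : nat.
Local Notation D := (totalD K).

Lemma main_aux m phi : (4 * m <= K)%N -> depends_upto m phi -> smooth_pos phi ->
  euler_hom m phi -> forall u, pos u -> L_op K (2 * m) (Lambda_op K m phi) u = 0.
Proof.
move=> mK dphi sphi eh u pu.
have dphi' : dep m.+1 phi by move=> u' v' uv; apply: dphi => i il; apply: uv.
set S := Lambda_op K m phi.
have sS : smooth_pos S.
  apply: (@good_sum _ m.+1 (fun j v => (-1) ^+ j.+1 * iter j D (partial j phi) v)) => j.
  by apply: good_scale; apply: good_iterD; apply: good_partial.
have sx0S : smooth_pos (fun v => v 0%N * S v) by apply: good_xmul.
have EA : forall j, eqp (fun v => v 0%N * partial j S v)
    (fun v => 1 * partial j (fun w => w 0%N * S w) v + (- (0%N == j)%:R) * S v).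
  move=> j v pv; rewrite partialM ?partial_x; first by ring.
  - exact: dvb_x.
  - exact: good_dvb.
have LA : L_op K (2 * m) S u = EL K (2 * m) (fun v => v 0%N * S v) u - S u.
  rewrite /L_op /EL.
  have -> : \sum_(j < (2 * m).+1) (-1) ^+ j * iter j D (fun v => v 0%N * partial j S v) u
     = \sum_(j < (2 * m).+1) ((-1) ^+ j * iter j D (partial j (fun v => v 0%N * S v)) u
        - ((-1) ^+ j * ((0%N == j)%:R * iter j D S u))).
    apply: eq_bigr => j _.
    rewrite (iterD_eqp K j (EA j) pu).
    rewrite (iterD_lin K j 1 (- (0%N == j)%:R) (good_partial j sx0S) sS pu); ring.
  rewrite sumrB; congr (_ - _).
  rewrite big_ord_recl /= expr0 !mul1r big1 ?addr0 // => j _.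
  by rewrite mul0r mulr0.
pose A := fun v => \sum_(j < m.+1) B K j (partial j phi) v.
have sA : smooth_pos A.
  apply: (@good_sum _ m.+1 (fun j v => B K j (partial j phi) v)) => j.
  by apply: good_B; apply: good_partial.
have EB : eqp (fun v => v 0%N * S v) (fun v => 1 * D A v + (-1) * phi v).
  move=> v pv.
  rewrite (D_sum K m.+1 (fun j => good_B K j (good_partial j sphi)) pv).
  have -> : \sum_(k < m.+1) D (B K k (partial k phi)) v =
      \sum_(k < m.+1) (v k * partial k phi v -
        (-1) ^+ k * (v 0%N * iter k D (partial k phi) v)).
    apply: eq_bigr => k _; apply: DB => //.
    - by have := ltn_ord k; lia.
    - exact: good_partial.
  rewrite sumrB -(eh v pv).
  have E2 : v 0%N * S v = - \sum_(k < m.+1) (-1) ^+ k * (v 0%N * iter k D (partial k phi) v).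
    rewrite /S /Lambda_op mulr_sumr -sumrN; apply: eq_bigr => k _; rewrite exprS; ring.
  rewrite E2; ring.
have depA : dep (2 * m) A.
  move=> u' v' uv; apply: eq_bigr => j _.
  case: (posnP j) => [j0|jp].
    by rewrite j0.
  have := dep_B K (j := j) (dep_partial j dphi') isT.
  have jm : (m.+1 + j.-1 <= 2 * m)%N by have := ltn_ord j; lia.
  move/(dep_mono jm); apply; exact: uv.
have PN : forall v, partial (2 * m) A v = 0 by move=> v; apply: (partial_dep0 depA).
have N2K : (2 * m <= K)%N by lia.
have C0 := EL_DA N2K sA PN pu.
have ED : EL K (2 * m) phi u = - S u.
  rewrite /EL -(big_mkord xpredT (fun j => (-1) ^+ j * iter j D (partial j phi) u)).
  rewrite (@big_cat_nat _ _ _ m.+1) //; last by lia.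
  rewrite [X in _ + X = _]big_nat_cond [X in _ + X = _]big1 ?addr0; last first.
    move=> j /andP[/andP[jm _] _].
    have -> : partial j phi = (fun _ => 0).
      by apply: funext => v; apply: (partial_dep0 dphi').
    by rewrite iterD_zero mulr0.
  rewrite big_mkord /S /Lambda_op -sumrN; apply: eq_bigr => j _.
  by rewrite exprS; ring.
have EC := EL_lin K (2 * m) (good_D K sA) sphi EB pu.
rewrite /= in EC.
by rewrite LA EC C0 ED; ring.
Qed.

End Jet.

Theorem mainTheorem10 (R : realType) (m K : nat) (phi : (nat -> R) -> R) :
  (4 * m <= K)%N ->
  depends_upto m phi ->
  smooth_pos phi ->
  euler_hom m phi ->
  forall u : (nat -> R), 0 < u 0%N ->
    L_op K (2 * m) (Lambda_op K m phi) u = 0.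
Proof.
move=> mK dp sp eh u pu.
exact: (main_aux mK dp sp eh (u := u) pu).
Qed.
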